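(* Let $d,t,m,L,N_1,\dots,N_L$ be natural numbers with $N_L=1$, let $\mathbf{N}=(N_L,N_{L-1},\dots,N_1,N_0=d)$, and let $\mathcal{W}=\{w^1,\dots,w^t\}\subset\mathbb{R}^d$. Suppose that (1) $t\geq 3m(N_1+1)(N_2+1)\cdots(N_L+1)$; (2) $w^1_1>w^2_1>\dots>w^t_1$ and $w^i_j=0$ for all $i$ and all $j=2,\dots,d$; (3) $f:\mathbb{R}^d\to\{0,1\}$ satisfies $f(w^i)\neq f(w^{i+1})$ for $i=1,\dots,t-1$. Then for any $\varphi\in\mathcal{NN}_{\mathbf{N},L}$ and any monotonic $g:\mathbb{R}\to\mathbb{R}$ there exists $\mathcal{U}\subset\mathcal{W}$ with $|\mathcal{U}|\geq m$ and $|g(\varphi(w))-f(w)|\geq 1/2$ for all $w\in\mathcal{U}$.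
   Context: $\mathcal{NN}_{\mathbf{N},L}$ is the set of maps $\varphi=W^L\rho W^{L-1}\rho\cdots\rho W^1:\mathbb{R}^d\to\mathbb{R}$ where each $W^\ell:\mathbb{R}^{N_{\ell-1}}\to\mathbb{R}^{N_\ell}$ is affine and $\rho(t)=\max\{0,t\}$ is applied coordinatewise. *)

(* Defs.v *)
From mathcomp Require Import all_boot all_order all_algebra.
From mathcomp Require Import reals.
Set Implicit Arguments. Unset Strict Implicit. Unset Printing Implicit Defensive.
Import Order.TTheory GRing.Theory Num.Theory.
Local Open Scope ring_scope.

Section NN.
Variable R : realType.

Definition relu (x : R) : R := Num.max x 0.

Definition Nd (d : nat) (N : nat -> nat) (l : nat) : nat :=
  if l is 0 then d else N l.

Variables (d : nat) (N : nat -> nat).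
Variable W : forall l : nat, 'M[R]_(Nd d N l.+1, Nd d N l).
Variable b : forall l : nat, 'cV[R]_(Nd d N l.+1).

Fixpoint hid (l : nat) : 'cV[R]_d -> 'cV[R]_(Nd d N l) :=
  match l return 'cV[R]_d -> 'cV[R]_(Nd d N l) with
  | 0 => fun x => x
  | l'.+1 => fun x => map_mx relu (W l' *m hid l' x + b l')
  end.

Definition net_out (L' : nat) (x : 'cV[R]_d) : 'cV[R]_(Nd d N L'.+1) :=
  W L' *m hid L' x + b L'.
End NN.

(* NN_{N,L} : maps R^d -> R realized by an L-layer ReLU network with widths
   N_0 = d, N_1, ..., N_L; the output in R^{N_L} (N_L = 1 in all uses) is
   identified with a real number by summing its (single) coordinate. *)
Definition NN (R : realType) (d : nat) (N : nat -> nat) (L : nat)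
  : ('cV[R]_d -> R) -> Prop :=
  fun phi => exists L', L = L'.+1 /\
    exists (W : forall l : nat, 'M[R]_(Nd d N l.+1, Nd d N l))
           (b : forall l : nat, 'cV[R]_(Nd d N l.+1)),
      forall x, phi x = \sum_(i < Nd d N L'.+1) (net_out W b L' x) i ord0.

Definition monotonic (R : realType) (g : R -> R) : Prop :=
  {homo g : x y / x <= y} \/ {homo g : x y / x <= y >-> y <= x}.

(* Main.v *)
Require Import Defs.
From mathcomp Require Import all_boot all_order all_algebra reals ring lra zify.
Import Order.TTheory GRing.Theory Num.Theory.
Local Open Scope ring_scope.

Lemma count_sep (S C : pred nat) :
  (forall i j, (i < j)%N -> S i -> S j -> exists k, (i <= k < j)%N /\ C k) ->
  forall n, (count S (iota 0 n) <= (count C (iota 0 n)).+1)%N.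
Proof.
move=> H n.
suff: (count S (iota 0 n) <= count C (iota 0 n))%N \/
  ((count S (iota 0 n) <= (count C (iota 0 n)).+1)%N /\
   exists s, (s < n)%N /\ S s /\ forall k, (s <= k < n)%N -> ~~ C k).
  by case=> [h|[h _]] //; apply: leq_trans h _.
elim: n => [|n IH]; first by left.
rewrite -addn1 iotaD !count_cat /= !addn0 add0n.
case: (boolP (S n)) => Sn; case: (boolP (C n)) => Cn /=.
- case: IH => [h|[h [s [sn [Ss hs]]]]]; first by left; rewrite leq_add2r.
  have [k [/andP [k1 k2] Ck]] := H s n sn Ss Sn.
  by move: (hs k); rewrite k1 k2 Ck => /(_ isT).
- case: IH => [h|[h [s [sn [Ss hs]]]]].
    right; split; first by rewrite addn0 addn1 ltnS.
    exists n; split; first by rewrite addn1.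
    split=> // k /andP [k1 k2]; have -> : k = n by lia.
    done.
  have [k [/andP [k1 k2] Ck]] := H s n sn Ss Sn.
  by move: (hs k); rewrite k1 k2 Ck => /(_ isT).
- case: IH => [h|[h _]]; left; first by rewrite addn0; lia.
  by rewrite addn0; lia.
- case: IH => [h|[h [s [sn [Ss hs]]]]]; first by left; rewrite !addn0.
  right; rewrite !addn0; split=> //; exists s; split; first by rewrite addn1 ltnW.
  split=> // k /andP [k1]; rewrite addn1 ltnS leq_eqVlt => /orP [/eqP->//|k2].
  by apply: hs; rewrite k1.
Qed.

Section Aff.
Variables (R : realType) (t : nat) (x : nat -> R).
Hypothesis xdec : forall i, (i.+1 < t)%N -> x i.+1 <= x i.

Definition aff (C : pred nat) (h : nat -> R) := exists a c : nat -> R,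
  (forall i, (i < t)%N -> h i = a i * x i + c i) /\
  (forall i, (i.+1 < t)%N -> ~~ C i -> a i = a i.+1 /\ c i = c i.+1).

Lemma aff_ext C h h' : aff C h -> (forall i, (i < t)%N -> h i = h' i) -> aff C h'.
Proof. move=> [a [c [H1 H2]]] e; exists a, c; split=> // i it; rewrite -e ?H1 //. Qed.

Lemma aff_sub C C' h : (forall n, C' n = false -> C n = false) -> aff C h -> aff C' h.
Proof.
move=> s [a [c [H1 H2]]]; exists a, c; split=> // i it nC; apply: H2 => //.
by rewrite s //; apply/negbTE.
Qed.

Lemma aff_cst C c0 : aff C (fun _ => c0).
Proof. exists (fun _ => 0), (fun _ => c0); split=> // i _; by rewrite mul0r add0r. Qed.

Lemma aff_x C : aff C x.
Proof. exists (fun _ => 1), (fun _ => 0); split=> // i _; by rewrite mul1r addr0. Qed.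

Lemma aff_add C h1 h2 : aff C h1 -> aff C h2 -> aff C (fun n => h1 n + h2 n).
Proof.
move=> [a [c [H1 H2]]] [a' [c' [H1' H2']]].
exists (fun n => a n + a' n), (fun n => c n + c' n); split.
  by move=> i it; rewrite H1 // H1' //; ring.
move=> i it nC; have [-> ->] := H2 i it nC; have [-> ->] := H2' i it nC; done.
Qed.

Lemma aff_scale C r h : aff C h -> aff C (fun n => r * h n).
Proof.
move=> [a [c [H1 H2]]]; exists (fun n => r * a n), (fun n => r * c n); split.
  by move=> i it; rewrite H1 //; ring.
move=> i it nC; have [-> ->] := H2 i it nC; done.
Qed.

Lemma aff_sum C I (r : seq I) (F : I -> nat -> R) :
  (forall i, aff C (F i)) -> aff C (fun n => \sum_(i <- r) F i n).
Proof.
move=> H; elim: r => [|j r IH].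
  by apply: (aff_ext _ _ _ (aff_cst C 0)) => i _; rewrite big_nil.
apply: (aff_ext _ _ _ (aff_add _ _ _ (H j) IH)) => i _; by rewrite big_cons.
Qed.

Definition smono (u : nat -> R) i j :=
  (forall k, (i <= k)%N -> (k < j)%N -> u k <= u k.+1) \/
  (forall k, (i <= k)%N -> (k < j)%N -> u k.+1 <= u k).

Lemma block C (a c : nat -> R) : (forall i, (i.+1 < t)%N -> ~~ C i -> a i = a i.+1 /\ c i = c i.+1) ->
  forall i j, (j < t)%N -> (forall k, (i <= k < j)%N -> ~~ C k) ->
  forall k, (i <= k <= j)%N -> a k = a i /\ c k = c i.
Proof.
move=> H i j jt nc; elim=> [|k IH] /andP [ik kj].
  by have -> : i = 0%N by lia.
case: (ltnP i k.+1) => ik'; last by have -> : i = k.+1 by lia.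
have [e1 e2] := IH (ltac:(apply/andP; split; lia)).
have [f1 f2] := H k (ltac:(lia)) (nc k (ltac:(apply/andP; split; lia))).
by rewrite -f1 -f2.
Qed.

Lemma aff_block_mono C h i j : aff C h -> (j < t)%N ->
  (forall k, (i <= k < j)%N -> ~~ C k) -> smono h i j.
Proof.
move=> [a [c [H1 H2]]] jt nc.
have B := @block C a c H2 i j jt nc.
have E : forall k, (i <= k <= j)%N -> h k = a i * x k + c i.
  by move=> k kr; have [e1 e2] := B k kr; rewrite H1 ?e1 ?e2 //; lia.
case: (leP 0 (a i)) => ha; [right|left] => k ik kj.
  rewrite !E; try (apply/andP; split; lia).
  have := xdec k (ltac:(lia)); nra.
rewrite !E; try (apply/andP; split; lia).
have := xdec k (ltac:(lia)); nra.
Qed.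

Lemma smono_chain1 (u : nat -> R) i j : (forall k, (i <= k)%N -> (k < j)%N -> u k <= u k.+1) ->
  forall k l, (i <= k)%N -> (k <= l)%N -> (l <= j)%N -> u k <= u l.
Proof.
move=> H k l ik; elim: l => [|l IH] kl lj.
  by have -> : k = 0%N by lia.
case: (ltnP k l.+1) => kl'; last by have -> : k = l.+1 by lia.
apply: le_trans (IH (ltac:(lia)) (ltac:(lia))) (H l (ltac:(lia)) (ltac:(lia))).
Qed.

Lemma smono_chain2 (u : nat -> R) i j : (forall k, (i <= k)%N -> (k < j)%N -> u k.+1 <= u k) ->
  forall k l, (i <= k)%N -> (k <= l)%N -> (l <= j)%N -> u l <= u k.
Proof.
move=> H k l ik; elim: l => [|l IH] kl lj.
  by have -> : k = 0%N by lia.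
case: (ltnP k l.+1) => kl'; last by have -> : k = l.+1 by lia.
apply: le_trans (H l (ltac:(lia)) (ltac:(lia))) (IH (ltac:(lia)) (ltac:(lia))).
Qed.

Definition cross (th : R) (u : nat -> R) n :=
  (n.+1 < t)%N && ((u n < th) != (u n.+1 < th)).

Lemma cross_uniq th u i j : smono u i j.+1 -> (i < j)%N -> cross th u i -> cross th u j -> False.
Proof.
move=> [H|H] ij /andP [_ ci] /andP [_ cj].
- have m1 := smono_chain1 _ _ _ H; have a1 := m1 i i.+1; have a2 := m1 i.+1 j; have a3 := m1 j j.+1.
  have b1 := a1 (leqnn _) (leqnSn _) (ltac:(lia)).
  have b2 := a2 (ltac:(lia)) (ltac:(lia)) (ltac:(lia)).
  have b3 := a3 (ltac:(lia)) (leqnSn _) (leqnn _).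
  move: ci cj; case: (ltP (u i) th); case: (ltP (u i.+1) th); case: (ltP (u j) th); case: (ltP (u j.+1) th) => //= *; lra.
- have m1 := smono_chain2 _ _ _ H; have a1 := m1 i i.+1; have a2 := m1 i.+1 j; have a3 := m1 j j.+1.
  have b1 := a1 (leqnn _) (leqnSn _) (ltac:(lia)).
  have b2 := a2 (ltac:(lia)) (ltac:(lia)) (ltac:(lia)).
  have b3 := a3 (ltac:(lia)) (leqnSn _) (leqnn _).
  move: ci cj; case: (ltP (u i) th); case: (ltP (u i.+1) th); case: (ltP (u j) th); case: (ltP (u j.+1) th) => //= *; lra.
Qed.

Lemma sep C h u th : aff C h -> (forall i j, smono h i j -> smono u i j) ->
  (count (fun n => cross th u n && ~~ C n) (iota 0 t) <= (count C (iota 0 t)).+1)%N.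
Proof.
move=> Ha Hm; apply: count_sep => i j ij /andP [ci nCi] /andP [cj nCj].
case: (boolP (has C (index_iota i j))).
  by move=> /hasP [k]; rewrite mem_index_iota => kr Ck; exists k.
move=> /hasPn nc; exfalso.
have jt : (j.+1 < t)%N by move: cj => /andP [].
apply: (cross_uniq _ _ _ _ _ ij ci cj); apply: Hm; apply: (aff_block_mono _ _ _ _ Ha jt).
move=> k /andP [k1 k2]; case: (ltnP k j) => kj.
  by apply: nc; rewrite mem_index_iota k1.
by have -> : k = j by lia.
Qed.

Lemma relu_aff C h : aff C h ->
  aff (fun n => C n || cross 0 h n) (fun n => Num.max (h n) 0).
Proof.
move=> [a [c [H1 H2]]].
exists (fun n => if h n < 0 then 0 else a n), (fun n => if h n < 0 then 0 else c n); split.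
  move=> i it; rewrite H1 //; case: ltP => _; [by rewrite mul0r addr0|by []].
move=> i it; rewrite negb_or /cross it /= => /andP [nC /negPn /eqP e].
by rewrite -e; have [-> ->] := H2 i it nC.
Qed.


Lemma count_or (a b : pred nat) s :
  (count (fun n => a n || b n) s <= count a s + count b s)%N.
Proof. elim: s => //= y s IH; case: (a y); case: (b y) => /=; lia. Qed.

Lemma count_ex m (P : 'I_m -> pred nat) s :
  (count (fun n => [exists k, P k n]) s <= \sum_(k < m) count (P k) s)%N.
Proof.
elim: s => [|y s IH] /=; first by rewrite big1.
rewrite big_split /= leq_add //.
case: existsP => [[k Pk]|_] //.
by rewrite (bigD1 k) //= Pk leq_addr.
Qed.

Lemma hid_aff (d : nat) (N : nat -> nat)
  (W : forall l : nat, 'M[R]_(Nd d N l.+1, Nd d N l))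
  (b : forall l : nat, 'cV[R]_(Nd d N l.+1))
  (v : nat -> 'cV[R]_d) (hd : (0 < d)%N)
  (hx : forall n, v n (Ordinal hd) ord0 = x n)
  (hz : forall n (j : 'I_d), (0 < j)%N -> v n j ord0 = 0) :
  forall l, exists C : pred nat,
    ((count C (iota 0 t)).+1 <= \prod_(1 <= j < l.+1) (N j).+1)%N /\
    forall k : 'I_(Nd d N l), aff C (fun n => hid W b l (v n) k ord0).
Proof.
elim=> [|l [C [cC Ha]]].
  exists (fun _ => false); split; first by rewrite count_pred0 big_geq.
  move=> k /=; case: (posnP k) => kz.
    have -> : k = Ordinal hd by apply: val_inj; rewrite /= kz.
    by apply: (aff_ext _ _ _ (aff_x (fun _ => false))) => i _.
  by apply: (aff_ext _ _ _ (aff_cst (fun _ => false) 0)) => i _; rewrite hz.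
pose pre (k : 'I_(Nd d N l.+1)) n := (W l *m hid W b l (v n) + b l) k ord0.
have Hpre : forall k, aff C (pre k).
  move=> k; apply: (aff_ext _ _ _ (aff_add _ _ _
     (aff_sum _ _ (index_enum 'I_(Nd d N l)) (fun j n => W l k j * hid W b l (v n) j ord0)
        (fun j => aff_scale _ _ _ (Ha j))) (aff_cst C (b l k ord0)))).
  by move=> i _; rewrite /pre !mxE.
pose C' n := C n || [exists k, cross 0 (pre k) n && ~~ C n].
exists C'; split.
  have c1 := count_or C (fun n => [exists k, cross 0 (pre k) n && ~~ C n]) (iota 0 t).
  have c2 := count_ex _ (fun k n => cross 0 (pre k) n && ~~ C n) (iota 0 t).
  have c3 : (\sum_(k < Nd d N l.+1) count (fun n => cross 0 (pre k) n && ~~ C n) (iota 0 t)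
      <= \sum_(k < Nd d N l.+1) (count C (iota 0 t)).+1)%N.
    by apply: leq_sum => k _; apply: (sep _ _ _ _ (Hpre k)).
  rewrite sum_nat_const card_ord in c3.
  rewrite big_nat_recr //=.
  have : ((count C (iota 0 t)).+1 * (N l.+1).+1 <=
     (\prod_(1 <= j < l.+1) (N j).+1) * (N l.+1).+1)%N by rewrite leq_mul2r cC orbT.
  rewrite /C'. move: c1 c2 c3 => /=. nia.
move=> k.
have H1 : forall n, C' n = false -> (C n || cross 0 (pre k) n) = false.
  move=> n; rewrite /C' => /norP [/negbTE -> /existsPn /(_ k)].
  by rewrite /= andbT => /negbTE ->.
apply: (aff_ext _ _ _ (aff_sub _ _ _ H1 (relu_aff _ _ (Hpre k)))).
by move=> i _ /=; rewrite mxE.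
Qed.

Lemma smono_comp (g : R -> R) h i j : monotonic g -> smono h i j -> smono (fun n => g (h n)) i j.
Proof.
case=> gm [H|H].
- by left=> k ik kj; apply: gm; apply: H.
- by right=> k ik kj; apply: gm; apply: H.
- by right=> k ik kj; apply: gm; apply: H.
- by left=> k ik kj; apply: gm; apply: H.
Qed.

End Aff.

Lemma pairs (P : pred nat) T : (forall n, (n.+1 < T)%N -> P n || P n.+1) ->
  (T./2 <= count P (iota 0 T))%N.
Proof.
move=> H.
have K : forall k, (k.*2 <= T)%N -> (k <= count P (iota 0 k.*2))%N.
  elim=> [|k IH] kT //.
  have -> : k.+1.*2 = (k.*2 + 2)%N by rewrite doubleS; lia.
  rewrite iotaD count_cat /= add0n.
  have := IH (ltac:(lia)); have := H k.*2 (ltac:(rewrite doubleS in kT; lia)).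
  case: (P k.*2); case: (P k.*2.+1) => //=; lia.
have := K T./2 (ltac:(rewrite -{2}(odd_double_half T); lia)).
have -> : T = ((T./2).*2 + (T - (T./2).*2))%N by rewrite -{1 3}(odd_double_half T); lia.
rewrite iotaD count_cat.
have e : ((((T./2).*2 + (T - (T./2).*2))./2) = T./2)%N by rewrite -{1 3}(odd_double_half T); lia.
rewrite e; lia.
Qed.


Lemma card_val t (p : pred nat) : #|[set i : 'I_t | p (val i)]| = count p (iota 0 t).
Proof. rewrite -val_enum_ord count_map cardsE -size_filter.
rewrite cardE /enum_mem; congr size. rewrite (@eq_filter _ (mem 'I_t) predT) // filter_predT. by apply: eq_filter. Qed.

Lemma cross_help (R : realType) (a b fa fb : R) : (fa = 0 \/ fa = 1) -> (fb = 0 \/ fb = 1) ->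
  fa <> fb -> `|a - fa| < 1/2 -> `|b - fb| < 1/2 -> (a < 1/2) != (b < 1/2).
Proof.
rewrite !ltr_distl => a1 a2 hF /andP [q1 q2] /andP [q3 q4].
case: (ltP a (1/2)); case: (ltP b (1/2)) => //= r1 r2; exfalso;
  case: a1 => a1; case: a2 => a2; try lra; apply: hF; by rewrite a1 a2.
Qed.

Theorem lemma5p4 (R : realType) (d t m L : nat) (N : nat -> nat)
  (hd : (0 < d)%N) (hL : (0 < L)%N) (hNL : N L = 1%N)
  (w : 'I_t -> 'cV[R]_d) (f : 'cV[R]_d -> R)
  (h1 : (3 * m * \prod_(1 <= l < L.+1) (N l).+1 <= t)%N)
  (h2a : forall i j : 'I_t, (i < j)%N -> w j (Ordinal hd) ord0 < w i (Ordinal hd) ord0)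
  (h2b : forall (i : 'I_t) (j : 'I_d), (0 < j)%N -> w i j ord0 = 0)
  (h3f : forall x, f x = 0 \/ f x = 1)
  (h3 : forall i j : 'I_t, val j = (val i).+1 -> f (w i) <> f (w j)) :
  forall (phi : 'cV[R]_d -> R) (g : R -> R), NN N L phi -> monotonic g ->
  exists U : {set 'I_t}, (m <= #|U|)%N /\
    forall i, i \in U -> 1 / 2 <= `|g (phi (w i)) - f (w i)|.
Proof.
move=> phi g [L' [eL [W [b Hphi]]]] gm.
have Pp : (0 < \prod_(1 <= l < L.+1) (N l).+1)%N by rewrite prodn_gt0.
case: t w h1 h2a h2b h3 => [|t'] w h1 h2a h2b h3.
  exists set0; split; last by move=> i; rewrite in_set0.
  rewrite cards0; nia.
pose T := t'.+1.
pose v n := w (inord n).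
pose x n := v n (Ordinal hd) ord0.
have xdec : forall i, (i.+1 < T)%N -> x i.+1 <= x i.
  move=> i iT; apply: ltW; apply: h2a; rewrite !inordK; lia.
have [C [cC Ha]] := @hid_aff R T x xdec d N W b v hd (fun n => erefl) (fun n j => h2b (inord n) j) L'.
have Hphi' : aff R T x C (fun n => phi (v n)).
  apply: (aff_ext _ _ _ _ _ _ (aff_sum _ _ _ _ _ (index_enum 'I_(Nd d N L'.+1))
     (fun i n => (W L' *m hid W b L' (v n) + b L') i ord0) _)).
  2: by move=> n _; rewrite Hphi.
  move=> i.
  apply: (aff_ext _ _ _ _ _ _ (aff_add _ _ _ _ _ _
     (aff_sum _ _ _ _ _ (index_enum 'I_(Nd d N L')) (fun j n => W L' i j * hid W b L' (v n) j ord0)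
        (fun j => aff_scale _ _ _ _ _ _ (Ha j))) (aff_cst _ _ _ C (b L' i ord0)))).
  by move=> n _; rewrite !mxE.
pose vv n := g (phi (v n)).
pose F n := f (v n).
pose err n := 1 / 2 <= `|vv n - F n|.
pose G n := @cross R T (1 / 2) vv n && ~~ C n.
have cG : (count G (iota 0 T) <= (count C (iota 0 T)).+1)%N.
  apply: (@sep R T x xdec C _ _ _ Hphi') => i j; exact: smono_comp.
have HE : forall n, (n.+1 < T)%N -> (err n || C n || G n) || (err n.+1 || C n.+1 || G n.+1).
  move=> n nT.
  case: (boolP (err n)) => //= e1; case: (boolP (err n.+1)) => /= [_|e2]; first by rewrite !orbT.
  case: (boolP (C n)) => //= nC; rewrite /G nC andbT /cross nT /=.
  have hF : F n <> F n.+1 by apply: h3; rewrite /= !inordK; lia.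
  move: e1 e2; rewrite /err -!ltNge.
  move=> e1 e2; by rewrite (cross_help _ _ _ _ _ (h3f (v n)) (h3f (v n.+1)) hF e1 e2).
have hp := pairs _ _ HE.
have o1 := count_or (fun n => err n || C n) G (iota 0 T).
have o2 := count_or err C (iota 0 T).
exists [set i : 'I_t'.+1 | err (val i)]; split.
  rewrite card_val -/T.
  subst L; rewrite big_nat_recr //= hNL in h1.
  move: hp o1 o2 cC cG.
  have : (0 < m)%N \/ m = 0%N by lia.
  case=> [mp|->] //.
  set P := \prod_(1 <= i < L'.+1) (N i).+1 in h1 *.
  have PP : (0 < P)%N by rewrite prodn_gt0.
  have k1 : (m <= m * P)%N by rewrite leq_pmulr.
  have k2 : (P <= m * P)%N by rewrite leq_pmull.
  have k3 : (6 * (m * P) <= T)%N by rewrite /T; nia.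
  have eT : T = t'.+1 by [].
  move: k1 k2 k3; set mP := (m * P)%N; clearbody mP; lia.
move=> i; rewrite in_set /err /vv /F /v inord_val; done.
Qed.
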